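(* Let $p\ge 3$ be prime and $s\ge 0$, and let $m=(p,p,\dots,p)$ (with $s+1$ entries). Then the Gabor–Steiner ETF $\mathcal{G}(m)$ is a set of roux lines.
   Context: Let $A=\bigoplus_{\ell=0}^s\mathbb{Z}_p$, $|m|=p^{s+1}$, and fix a primitive $p$-th root of unity $\zeta_p$. Let $T_p$ be the $p\times p$ circulant matrix with first row $(0,1,0,\dots,0)$ and $M_p=\mathrm{diag}(1,\zeta_p,\dots,\zeta_p^{p-1})$. For $k,\kappa\in A$ put $T^{(k)}=\bigotimes_{\ell=0}^sT_p^{k_\ell}$, $M^{(\kappa)}=\bigotimes_{\ell=0}^sM_p^{\kappa_\ell}$ (Kronecker products), and $\pi(k,\kappa)=I_{(|m|-1)/2}\otimes(M^{(\kappa)}T^{(k)})$. Index coordinates of $\mathbb{C}^{|m|}$ by $A$ in lexicographic order. Let $\mathcal{I}$ be the first $(|m|-1)/2$ elements of $A$ in lexicographic order; for $i\in\mathcal{I}$ let $\phi_i\in\mathbb{C}^{|m|}$ have entry $1$ at index $i$, entry $-1$ at index $-i-\mathbb{1}$ (computed in $A$, $\mathbb{1}=(1,\dots,1)$), and $0$ elsewhere; let $\psi$ be the stacking of the $\phi_i$ in lexicographic order. Then $\mathcal{G}(m)=\{\pi(k,\kappa)\psi:(k,\kappa)\in A\times A\}$, a family of $|m|^2$ vectors of equal norm $\nu$ with pairwise inner products of constant absolute value $\alpha>0$ (an equiangular tight frame up to scaling). Its signature matrix is $(\Phi^*\Phi-\nu^2I)/\alpha$, and a normalized signature matrix is the signature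 matrix of a family $\{c_x\varphi_x\}$ with unimodular $c_x$ whose first row and column (indexed by $(0,0)$) have all off-diagonal entries equal to $1$. Roux lines are the complex analogue of regular two-graphs introduced by Iverson and Mixon via association-scheme axioms on the Gram matrix; by their criterion (Iverson–Mixon, Corollary 4.6), a normalized signature matrix $\overline{S}$ corresponds to equal-norm representatives of roux lines if and only if (1) all entries of $\overline{S}$ are roots of unity and (2) for every positive integer $N$ the Hadamard power $\overline{S}^{\circ N}$ (entrywise $N$-th power) has exactly two distinct eigenvalues. *)

(* Defs.v *)
From HB Require Import structures.
From mathcomp Require Import all_boot all_order all_algebra all_field.
Set Implicit Arguments. Unset Strict Implicit. Unset Printing Implicit Defensive.
Import Order.TTheory GRing.Theory Num.Theory.
Local Open Scope ring_scope.

Definition A (p s : nat) := {ffun 'I_s.+1 -> 'Z_p}.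

(* rank of j in the lexicographic order (coordinate 0 most significant) *)
Definition lexrank (p s : nat) (j : A p s) : nat :=
  (\sum_(l < s.+1) (val (j l)) * p ^ (s - l))%N.

Definition one_vec (p s : nat) : A p s := [ffun => 1].

(* I = first (|m|-1)/2 elements of A in lexicographic order, |m| = p^(s+1) *)
Definition inI (p s : nat) (i : A p s) : bool :=
  (lexrank i < (p ^ s.+1).-1 %/ 2)%N.

Definition Iset (p s : nat) := {i : A p s | inI i}.

Definition Tp (p : nat) : 'M[algC]_((Zp_trunc p).+2) :=
  \matrix_(a, b) ((b == (a : 'Z_p) + 1)%:R).
Definition Mp (p : nat) (z : algC) : 'M[algC]_((Zp_trunc p).+2) :=
  \matrix_(a, b) ((a == b)%:R * z ^+ (val a)).

(* Kronecker product  F 0 (x) F 1 (x) ... (x) F s, indexed by A in lexicographic order *)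
Definition kron (p s : nat) (F : 'I_s.+1 -> 'M[algC]_((Zp_trunc p).+2))
  (j j' : A p s) : algC := \prod_(l < s.+1) F l (j l) (j' l).

Definition Tk (p s : nat) (k : A p s) := kron (fun l => Tp p ^+ val (k l)).
Definition Mk (p s : nat) (z : algC) (kap : A p s) :=
  kron (fun l => Mp p z ^+ val (kap l)).

Definition MT (p s : nat) (z : algC) (k kap : A p s) (j j' : A p s) : algC :=
  \sum_(j'' : A p s) Mk z kap j j'' * Tk k j'' j'.

Definition phi (p s : nat) (i : A p s) (j : A p s) : algC :=
  if j == i then 1 else if j == - i - one_vec p s then -1 else 0.

(* vectors of C^((|m|-1)/2 * |m|) are indexed by I x A (block i, coordinate j);
   pi(k,kappa) psi = (I (x) M^kappa T^k) psi, block i is M^kappa T^k phi_i *)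
Definition gabor (p s : nat) (z : algC) (x : A p s * A p s)
  (v : Iset p s * A p s) : algC :=
  \sum_(j' : A p s) MT z x.1 x.2 v.2 j' * phi (val v.1) j'.

Definition gram (X V : finType) (Phi : X -> V -> algC) (x y : X) : algC :=
  \sum_(v : V) (Phi x v)^* * Phi y v.

Definition sigmat (X V : finType) (Phi : X -> V -> algC) (nu2 alpha : algC)
  (x y : X) : algC := (gram Phi x y - (x == y)%:R * nu2) / alpha.

Definition hadamard_pow (X : finType) (S : X -> X -> algC) (N : nat) :=
  fun x y => S x y ^+ N.

Definition to_mx (X : finType) (S : X -> X -> algC) : 'M[algC]_#|X| :=
  \matrix_(i, j) S (enum_val i) (enum_val j).

Definition two_eigenvalues (n : nat) (M : 'M[algC]_n) : Prop :=
  exists a b : algC, a != b /\ forall l, eigenvalue M l = (l == a) || (l == b).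

Definition root_of_unity (c : algC) : Prop := exists n : nat, (0 < n)%N /\ c ^+ n = 1.

(* Phi is an equal-norm equiangular family (norm^2 nu2, |inner products| alpha > 0)
   and, via the Iverson-Mixon criterion (Cor. 4.6), some normalized signature
   matrix (rows/columns indexed by x0) has root-of-unity off-diagonal entries and
   all Hadamard powers have exactly two distinct eigenvalues. *)
Definition roux_lines (X V : finType) (x0 : X) (Phi : X -> V -> algC) : Prop :=
  exists nu2 alpha : algC,
    0 < alpha /\
    (forall x, gram Phi x x = nu2) /\
    (forall x y, x != y -> `|gram Phi x y| = alpha) /\
    exists c : X -> algC,
      (forall x, `|c x| = 1) /\
      let Sb := sigmat (fun x v => c x * Phi x v) nu2 alpha in
      (forall y, y != x0 -> Sb x0 y = 1 /\ Sb y x0 = 1) /\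
      (forall x y, x != y -> root_of_unity (Sb x y)) /\
      (forall N : nat, (0 < N)%N -> two_eigenvalues (to_mx (hadamard_pow Sb N))).

(* Main.v *)
Require Import Defs.
From mathcomp Require Import all_boot all_order all_algebra all_field zify ring.
Set Implicit Arguments. Unset Strict Implicit. Unset Printing Implicit Defensive.
Import Order.TTheory GRing.Theory Num.Theory.
Local Open Scope ring_scope.

Section G.
Variables (q s : nat) (z : algC).
Local Notation p := q.+3.
Hypothesis pp : prime p.
Hypothesis zp : p.-primitive_root z.
Local Notation AA := (A p s).

Lemma horner_rec n (f : nat -> nat) :
  (\sum_(l < n.+1) f l * p ^ (n - l) = p * (\sum_(l < n) f l * p ^ (n.-1 - l)) + f n)%N.
Proof.
rewrite big_ord_recr /= subnn expn0 muln1; congr (_ + _)%N.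
rewrite big_distrr; apply: eq_bigr => l _ /=.
have -> : (n - l = (n.-1 - l).+1)%N by have := ltn_ord l; lia.
by rewrite expnS mulnCA.
Qed.

Lemma horner_inj n (f g : nat -> nat) :
  (forall l, l < n -> f l < p)%N -> (forall l, l < n -> g l < p)%N ->
  (\sum_(l < n) f l * p ^ (n.-1 - l) = \sum_(l < n) g l * p ^ (n.-1 - l))%N ->
  forall l, (l < n)%N -> f l = g l.
Proof.
elim: n => [//|n IH] Hf Hg.
rewrite /= !horner_rec => E.
have Hn : f n = g n.
  have := congr1 (modn^~ p) E.
  by rewrite ![(p * _)%N]mulnC !modnMDl !modn_small ?Hf ?Hg.
move: E; rewrite Hn => /addIn /eqP; rewrite eqn_mul2l /= => /eqP E.
move=> l; rewrite ltnS leq_eqVlt => /orP [/eqP -> //|].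
apply: IH => // l' Hl'; [apply: Hf | apply: Hg]; lia.
Qed.

Lemma geom n : (\sum_(l < n) p.-1 * p ^ (n.-1 - l) = p ^ n - 1)%N.
Proof.
elim: n => [|n IH]; first by rewrite big_ord0.
rewrite (horner_rec n (fun _ => p.-1)) IH expnS.
have : (0 < p ^ n)%N by rewrite expn_gt0.
nia.
Qed.

Lemma lexrank_inj (u v : A p s) : lexrank u = lexrank v -> u = v.
Proof.
rewrite /lexrank => E.
have := @horner_inj s.+1 (fun l => val (u (inord l))) (fun l => val (v (inord l))).
move=> /(_ _ _ _) H.
apply/ffunP => l; apply: val_inj; rewrite -(inord_val l).
apply: H => //.
- by move=> l' _; exact: ltn_ord.
- by move=> l' _; exact: ltn_ord.
- by rewrite /=; under eq_bigr => i _ do rewrite inord_val; under [in RHS]eq_bigr => i _ do rewrite inord_val.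
Qed.

Lemma vZ n : val (n%:R : 'Z_p) = (n %% p)%N.
Proof. exact: (val_Zp_nat (isT : (1 < p)%N) n). Qed.

Lemma val_sig (a : 'Z_p) : val (- a - 1) = (q.+2 - val a)%N.
Proof.
have Ha : (val a < q.+3)%N := ltn_ord a.
have -> : - a - 1 = ((q.+2 - val a)%N)%:R.
  rewrite natrB; last by lia.
  have -> : (q.+2%:R : 'Z_p) = -1.
    apply: (addIr 1); rewrite addNr natr1; apply: val_inj.
    by rewrite vZ modnn.
  have -> : ((val a)%:R : 'Z_p) = a := natr_Zp a.
  by rewrite addrC.
by rewrite vZ modn_small //; lia.
Qed.

Definition sig (u : A p s) : A p s := - u - one_vec p s.

Lemma sigK u : sig (sig u) = u.
Proof. by rewrite /sig opprB opprK addrC addKr. Qed.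

Lemma sig_l u l : sig u l = - u l - 1.
Proof. by rewrite /sig !ffunE. Qed.

Lemma lexrank_sig u : (lexrank (sig u) + lexrank u = p ^ s.+1 - 1)%N.
Proof.
rewrite /lexrank -big_split -geom /=; apply: eq_bigr => l _.
rewrite -mulnDl sig_l val_sig; congr (_ * _)%N.
have Ha : (val (u l) < q.+3)%N := ltn_ord (u l).
by rewrite subnK // -ltnS.
Qed.
Lemma zp1 : z ^+ p = 1. Proof. exact: prim_expr_order zp. Qed.

Definition e (t : 'Z_p) : algC := z ^+ (val t).

Lemma e0 : e 0 = 1. Proof. by rewrite /e expr0. Qed.
Lemma eD a b : e (a + b) = e a * e b.
Proof. by rewrite /e -exprD -(prim_expr_mod zp (val a + val b)). Qed.
Lemma eM_nat (a b : 'Z_p) : z ^+ (val a * val b) = e (a * b).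
Proof. by rewrite /e -(prim_expr_mod zp (val a * val b)). Qed.
Lemma eMn a n : e (a *+ n) = e a ^+ n.
Proof. elim: n => [|n IH]; first by rewrite mulr0n e0 expr0. by rewrite mulrS eD IH exprS. Qed.
Lemma e_pow_p a : e a ^+ p = 1.
Proof. by rewrite /e -exprM mulnC exprM zp1 expr1n. Qed.
Lemma norm_e a : `|e a| = 1.
Proof.
have h := e_pow_p a.
have : `|e a| ^+ p = 1 by rewrite -normrX h normr1.
by move/eqP; rewrite pexpr_eq1 ?normr_ge0 // => /eqP.
Qed.
Lemma eN a : e (- a) = (e a)^*.
Proof.
have h1 : e a * e (-a) = 1 by rewrite -eD subrr e0.
have h2 : e a * (e a)^* = 1 by rewrite -normCK norm_e expr1n.
have ne : e a != 0 by rewrite -normr_eq0 norm_e oner_eq0.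
by apply: (mulfI ne); rewrite h1 h2.
Qed.
Lemma e_eq1 a : (e a == 1) = (a == 0).
Proof.
rewrite /e -(prim_order_dvd zp); apply/idP/idP; last by move/eqP->.
by move=> /dvdn_leq; case: a => [[|a] Ha] //= /(_ isT); rewrite leqNgt Ha.
Qed.

Lemma T_even : exists K, ((p ^ s.+1).-1 = K * 2)%N.
Proof.
have Hodd : odd (p ^ s.+1).
  by rewrite oddX; case: (even_prime pp) => [//|->]; rewrite orbT.
have Hpos : (0 < p ^ s.+1)%N by rewrite expn_gt0.
exists ((p ^ s.+1).-1)./2.
move: Hodd Hpos; case: (p ^ s.+1)%N => // n /= Hn _.
by rewrite -{1}(odd_double_half n) (negbTE Hn) add0n muln2.
Qed.

Lemma inI_sig_ne u : inI u -> sig u != u.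
Proof.
rewrite /inI; have [K HK] := T_even; rewrite HK mulnK //.
apply: contraTN => /eqP E.
have := lexrank_sig u; rewrite E subn1 HK.
lia.
Qed.

Lemma inI_sig u : sig u != u -> inI u = ~~ inI (sig u).
Proof.
move=> ne; rewrite /inI; have [K HK] := T_even; rewrite HK mulnK //.
have := lexrank_sig u; rewrite subn1 HK => E.
have ne' : lexrank (sig u) != lexrank u.
  by apply: contra ne => /eqP /lexrank_inj ->.
move: ne'; rewrite -leqNgt => /eqP ne'.
apply/idP/idP; lia.
Qed.

Lemma sig_eq u i : (u == sig i) = (i == sig u).
Proof. by apply/eqP/eqP => ->; rewrite sigK. Qed.

Lemma sig_inj : injective sig.
Proof. exact: can_inj sigK. Qed.

Lemma phiE i u : inI i -> phi i u = (u == i)%:R - (u == sig i)%:R.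
Proof.
move=> Hi; rewrite /phi -/(sig i).
have ne := inI_sig_ne Hi.
case: (eqVneq u i) => [E|ne1]; first by rewrite E eq_sym (negbTE ne) subr0.
case: (eqVneq u (sig i)) => [E2|ne2]; first by rewrite sub0r.
by rewrite subr0.
Qed.

Lemma sum_Iset (F : A p s -> algC) :
  \sum_(i : Iset p s) F (val i) = \sum_(i | inI i) F i.
Proof.
rewrite (reindex_omap (val : Iset p s -> A p s) insub); last first.
  by move=> i Pi; rewrite insubT.
apply: eq_bigl => -[i iA] /=; by rewrite insubT ?iA /= eqxx.
Qed.

Lemma sum_delta (T : finType) (P : pred T) (a : T) (G : T -> algC) :
  \sum_(i | P i) (i == a)%:R * G i = (P a)%:R * G a.
Proof.
rewrite big_mkcond (bigD1 a) //= big1 ?addr0.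
  by case: (P a); rewrite ?eqxx ?mul1r ?mul0r.
by move=> i /negbTE ->; case: (P i); rewrite ?mul0r.
Qed.

Lemma Qsum u v :
  \sum_(i : Iset p s) phi (val i) u * phi (val i) v =
  (u == v)%:R - (v == sig u)%:R.
Proof.
rewrite (sum_Iset (fun i => phi i u * phi i v)).
transitivity (\sum_(i | inI i) ((i == u)%:R - (i == sig u)%:R) *
                              ((i == v)%:R - (i == sig v)%:R) : algC).
  apply: eq_bigr => i Hi; rewrite !phiE //.
  by rewrite (sig_eq u) (sig_eq v) (eq_sym u) (eq_sym v).
under eq_bigr => i _ do rewrite mulrBl.
rewrite sumrB !sum_delta.
rewrite (eq_sym (sig u) v) (inj_eq sig_inj) (sig_eq u v).
case: (eqVneq (sig u) u) => [E|ne].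
  by rewrite E (eq_sym u v) !subrr.
rewrite (inI_sig ne); case: (inI (sig u)) => /=.
  by rewrite mul0r mul1r sub0r opprB.
by rewrite mul1r mul0r subr0.
Qed.
Lemma sum_delta1 (T : finType) (a : T) (G : T -> algC) :
  \sum_i (a == i)%:R * G i = G a.
Proof.
rewrite (bigD1 a) //= eqxx mul1r big1 ?addr0 //.
by move=> i ne; rewrite eq_sym (negbTE ne) mul0r.
Qed.

Lemma Mp_pow n (a b : 'Z_p) : (Mp p z ^+ n) a b = (a == b)%:R * z ^+ (val a * n).
Proof.
elim: n a b => [|n IH] a b.
  by rewrite expr0 muln0 expr0 mulr1 mxE.
rewrite exprSr -mulmxE mxE.
under eq_bigr => c _ do rewrite IH mxE -mulrA.
by rewrite sum_delta1 mulrCA -exprD mulnS addnC.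
Qed.

Lemma Tp_pow n (a b : 'Z_p) : (Tp p ^+ n) a b = (b == a + n%:R)%:R.
Proof.
elim: n a b => [|n IH] a b.
  by rewrite expr0 addr0 mxE eq_sym.
rewrite exprSr -mulmxE mxE.
under eq_bigr => c _ do rewrite IH mxE.
rewrite (eq_bigr (fun c => ((a + n%:R) == c)%:R * (b == c + 1)%:R)); last first.
  by move=> c _; rewrite eq_sym.
by rewrite sum_delta1 -natr1 addrA.
Qed.
Definition dot (a b : AA) : 'Z_p := \sum_l a l * b l.

Lemma prod_eq (u v : AA) : \prod_l (u l == v l)%:R = (u == v)%:R :> algC.
Proof.
case: (eqVneq u v) => [->|ne]; first by rewrite big1 // => l _; rewrite eqxx.
have [l Hl] : exists l, u l != v l.
  apply/existsP; move: ne; apply: contraR; rewrite negb_exists => /forallP H.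
  by apply/eqP/ffunP => l; apply/eqP; have := H l; rewrite negbK.
by rewrite (bigD1 l) //= (negbTE Hl) mul0r.
Qed.

Lemma Mk_E (kap j j'' : AA) : Mk z kap j j'' = (j == j'')%:R * e (dot j kap).
Proof.
rewrite /Mk /kron.
under eq_bigr => l _ do rewrite Mp_pow eM_nat.
by rewrite big_split /= prod_eq /dot (big_morph e eD e0).
Qed.

Lemma Tk_E (k j'' j' : AA) : Tk k j'' j' = (j' == j'' + k)%:R.
Proof.
rewrite /Tk /kron -prod_eq; apply: eq_bigr => l _.
rewrite Tp_pow !ffunE.
have -> : ((val (k l))%:R : 'Z_p) = k l := natr_Zp (k l).
by [].
Qed.

Lemma MT_E (k kap j j' : AA) : MT z k kap j j' = e (dot j kap) * (j' == j + k)%:R.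
Proof.
rewrite /MT.
under eq_bigr => j'' _ do rewrite Mk_E Tk_E -mulrA.
by rewrite sum_delta1.
Qed.

Lemma gabor_E (x : AA * AA) (v : Iset p s * AA) : gabor z x v = e (dot v.2 x.2) * phi (val v.1) (v.2 + x.1).
Proof.
rewrite /gabor.
under eq_bigr => j' _ do rewrite MT_E -mulrA mulrCA eq_sym.
by rewrite sum_delta1.
Qed.

Local Notation n := (p ^ s.+1)%N.

Lemma dot0r j : dot j 0 = 0.
Proof. by rewrite /dot big1 // => l _; rewrite ffunE mulr0. Qed.

Lemma dotDl a b c : dot (a + b) c = dot a c + dot b c.
Proof. by rewrite /dot -big_split; apply: eq_bigr => l _; rewrite ffunE mulrDl. Qed.

Lemma dotDr a b c : dot c (a + b) = dot c a + dot c b.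
Proof. by rewrite /dot -big_split; apply: eq_bigr => l _; rewrite ffunE mulrDr. Qed.

Lemma dotNr a c : dot c (- a) = - dot c a.
Proof. by rewrite /dot -sumrN; apply: eq_bigr => l _; rewrite ffunE mulrN. Qed.

Lemma dotNl a c : dot (- a) c = - dot a c.
Proof. by rewrite /dot -sumrN; apply: eq_bigr => l _; rewrite ffunE mulNr. Qed.

Lemma dotC a b : dot a b = dot b a.
Proof. by rewrite /dot; apply: eq_bigr => l _; rewrite mulrC. Qed.

Lemma card_AA : #|{: AA}| = n.
Proof. by rewrite card_ffun !card_ord. Qed.

Lemma char_sum (a : AA) : \sum_(j : AA) e (dot j a) = (a == 0)%:R * n%:R.
Proof.
case: (eqVneq a 0) => [->|ne].
  under eq_bigr => j _ do rewrite dot0r e0.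
  by rewrite sumr_const card_AA mul1r.
rewrite mul0r.
have [l Hl] : exists l, a l != 0.
  apply/existsP; move: ne; apply: contraR; rewrite negb_exists => /forallP H.
  by apply/eqP/ffunP => l; apply/eqP; have := H l; rewrite negbK ffunE.
pose d : AA := [ffun l' => (l' == l)%:R].
have Hd : dot d a = a l.
  rewrite /dot (bigD1 l) //= big1 ?addr0; first by rewrite ffunE eqxx mul1r.
  by move=> l' ne'; rewrite ffunE (negbTE ne') mul0r.
set S := \sum_j _.
have HS : S = S * e (a l).
  rewrite {1}/S (reindex_inj (addIr d)) /= /S mulr_suml; apply: eq_bigr => j _.
  by rewrite dotDl eD Hd.
have : S * (1 - e (a l)) = 0 by rewrite mulrBr mulr1 -HS subrr.
move/eqP; rewrite mulf_eq0 subr_eq0 (eq_sym 1) e_eq1 (negbTE Hl) orbF.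
by move/eqP.
Qed.

Lemma odd_p : odd p.
Proof. by case: (even_prime pp). Qed.

Definition h2 : 'Z_p := (2%:R)^-1.

Lemma unit2 : (2%:R : 'Z_p) \is a GRing.unit.
Proof. by rewrite unitZpE // coprime_sym coprime2n odd_p. Qed.

Lemma coord (a b c : 'Z_p) : (a + c == -(a+b) - 1) = (a == h2 * -(b + c + 1)).
Proof.
rewrite -subr_eq0.
have -> : a + c - (-(a+b) - 1) = 2%:R * a + (b + c + 1) by ring.
rewrite addr_eq0; apply/eqP/eqP => H.
  by rewrite -H mulrA /h2 mulVr ?unit2 // mul1r.
by rewrite H mulrA /h2 mulrV ?unit2 // mul1r.
Qed.

Lemma eq_ffun (u w : AA) : (u == w) = [forall l, u l == w l].
Proof.
apply/eqP/forallP => [-> l //|H]; apply/ffunP => l; exact/eqP.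
Qed.

Definition j0 (x y : AA * AA) : AA := [ffun l => h2 * - (x.1 l + y.1 l + 1)].

Lemma sig_cond j (x y : AA * AA) : (j + y.1 == sig (j + x.1)) = (j == j0 x y).
Proof.
rewrite !eq_ffun; apply: eq_forallb => l.
by rewrite sig_l !ffunE coord.
Qed.

Lemma conjM' (a b : algC) : (a * b)^* = a^* * b^*.
Proof. exact: rmorphM. Qed.

Lemma phi_conj (i u : AA) : (phi i u)^* = phi i u.
Proof.
rewrite /phi; case: (u == i); first by rewrite rmorph1.
by case: (u == _); rewrite ?rmorphN ?rmorph1 ?rmorph0.
Qed.

Lemma gramE (x y : AA * AA) :
  gram (gabor z) x y = (x == y)%:R * n%:R - e (dot (j0 x y) (y.2 - x.2)).
Proof.
rewrite /gram.
under eq_bigr => v _ do rewrite !gabor_E.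
rewrite -(pair_bigA _ (fun i j => (e (dot j x.2) * phi (val i) (j + x.1))^* *
                                 (e (dot j y.2) * phi (val i) (j + y.1)))) /=.
rewrite exchange_big /=.
transitivity (\sum_(j : AA) e (dot j (y.2 - x.2)) *
   ((j + x.1 == j + y.1)%:R - (j + y.1 == sig (j + x.1))%:R)).
  apply: eq_bigr => j _.
  under eq_bigr => i _ do rewrite conjM' phi_conj mulrACA.
  rewrite -mulr_sumr Qsum; congr (_ * _).
  by rewrite -eN -eD dotDr dotNr addrC.
under eq_bigr => j _ do rewrite (inj_eq (addrI j)) sig_cond mulrBr.
rewrite sumrB; congr (_ - _).
  rewrite -mulr_suml char_sum subr_eq0.
  case: x y => [k1 k2] [k3 k4] /=; rewrite xpair_eqE (eq_sym k4).
  by case: (k1 == k3); case: (k2 == k4); rewrite /= ?mul1r ?mul0r ?mulr1 ?mulr0.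
under eq_bigr => j _ do rewrite mulrC eq_sym.
by rewrite sum_delta1.
Qed.

Definition fq (x : AA * AA) : 'Z_p := - h2 * (dot x.1 x.2 + dot (one_vec p s) x.2).
Definition Bf (x y : AA * AA) : 'Z_p := - h2 * (dot x.1 y.2 - dot y.1 x.2).

Lemma dotZl (c : 'Z_p) (w v : AA) : dot [ffun l => c * w l] v = c * dot w v.
Proof. by rewrite /dot mulr_sumr; apply: eq_bigr => l _; rewrite ffunE mulrA. Qed.

Lemma fE_dec x y : dot (j0 x y) (y.2 - x.2) = fq y - fq x + Bf x y.
Proof.
have -> : j0 x y = [ffun l => h2 * (- (x.1 + y.1 + one_vec p s)) l].
  by apply/ffunP => l; rewrite !ffunE.
rewrite dotZl /fq /Bf dotNl !dotDl !dotDr !dotNr (dotC y.1 x.2).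
ring.
Qed.

Lemma Bf_xx x : Bf x x = 0.
Proof. by rewrite /Bf subrr mulr0. Qed.
Lemma dot0l a : dot 0 a = 0.
Proof. by rewrite /dot big1 // => l _; rewrite ffunE mul0r. Qed.
Lemma Bf_0x y : Bf 0 y = 0.
Proof. by rewrite /Bf /= dot0l dot0r subrr mulr0. Qed.
Lemma Bf_x0 y : Bf y 0 = 0.
Proof. by rewrite /Bf /= dot0l dot0r subrr mulr0. Qed.

Lemma gram_scale (X V : finType) (Phi : X -> V -> algC) (c : X -> algC) x y :
  gram (fun x v => c x * Phi x v) x y = (c x)^* * c y * gram Phi x y.
Proof.
rewrite /gram mulr_sumr; apply: eq_bigr => v _.
rewrite conjM'. ring.
Qed.

Definition dd (x : AA * AA) : algC := if x == 0 then 1 else -1.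
Definition cc (x : AA * AA) : algC := dd x * e (- fq x).

Lemma dd_conj x : (dd x)^* = dd x.
Proof. by rewrite /dd; case: (x == 0); rewrite ?rmorphN rmorph1. Qed.
Lemma dd2 x : dd x * dd x = 1.
Proof. by rewrite /dd; case: (x == 0); rewrite ?mulrNN mulr1. Qed.

Lemma norm_cc x : `|cc x| = 1.
Proof.
rewrite /cc normrM norm_e mulr1 /dd; case: (x == 0); by rewrite ?normrN normr1.
Qed.

Lemma e_conjN a : (e (- a))^* = e a.
Proof. by rewrite eN conjCK. Qed.

Lemma Sb_E x y :
  sigmat (fun x v => cc x * gabor z x v) (n%:R - 1) 1 x y =
  if x == y then 0 else - (dd x * dd y) * e (Bf x y).
Proof.
rewrite /sigmat divr1 gram_scale gramE.
case: (eqVneq x y) => [<-|ne].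
  rewrite ?eqxx subrr dot0r e0 mul1r.
  have -> : (cc x)^* * cc x = 1.
    by rewrite mulrC -normCK norm_cc expr1n.
  by rewrite mul1r subrr.
rewrite mul0r sub0r mul0r subr0 fE_dec !eD /cc conjM' dd_conj e_conjN.
have h1 : e (fq x) * e (- fq x) = 1 by rewrite -eD subrr e0.
have h2' : e (- fq y) * e (fq y) = 1 by rewrite -eD addNr e0.
transitivity (- (dd x * dd y) * e (Bf x y) * ((e (fq x) * e (- fq x)) * (e (- fq y) * e (fq y)))).
  ring.
by rewrite h1 h2' !mulr1.
Qed.

Lemma sum_enum (X : finType) (F : X -> algC) : \sum_(i < #|X|) F (enum_val i) = \sum_x F x.
Proof.
rewrite -(big_enum_val_cond (A := X) xpredT F) /=.
by apply: eq_bigl => x; rewrite /= ?andbT ?inE.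
Qed.

Lemma prod_mx0 (X : finType) (M : X -> X -> algC) (a b : algC) :
  (forall x w, \sum_y (M x y - (x == y)%:R * a) * (M y w - (y == w)%:R * b) = 0) ->
  (to_mx M - a%:M) *m (to_mx M - b%:M) = 0.
Proof.
move=> H; apply/matrixP => i j; rewrite !mxE.
have E := sum_enum (fun y => (M (enum_val i) y - (enum_val i == y)%:R * a) *
   (M y (enum_val j) - (y == enum_val j)%:R * b)).
rewrite H in E; rewrite -[RHS]E.
apply: eq_bigr => k _; rewrite !mxE !(inj_eq enum_val_inj).
by rewrite !mulr_natl.
Qed.

Lemma two_eig (X : finType) (M : X -> X -> algC) (a b : algC) :
  a != b ->
  (forall x w, \sum_y (M x y - (x == y)%:R * a) * (M y w - (y == w)%:R * b) = 0) ->
  (forall x w, \sum_y (M x y - (x == y)%:R * b) * (M y w - (y == w)%:R * a) = 0) ->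
  (exists x1 y1, x1 != y1 /\ M x1 y1 != 0) ->
  two_eigenvalues (to_mx M).
Proof.
move=> ab Hab Hba [x1 [y1 [ne Hne]]].
set G := to_mx M.
have Pab := prod_mx0 Hab; have Pba := prod_mx0 Hba.
have evr : forall a' b', (G - b'%:M) *m (G - a'%:M) = 0 -> eigenvalue G a'.
  move=> a' b' P; apply/eigenvalueP.
  exists (row (enum_rank x1) (G - b'%:M)).
  - have : row (enum_rank x1) ((G - b'%:M) *m (G - a'%:M)) = 0 by rewrite P row0.
    rewrite row_mul mulmxBr mul_mx_scalar => /eqP; rewrite subr_eq0 => /eqP.
    by [].
  - apply/eqP => /matrixP /(_ 0 (enum_rank y1)).
    rewrite !mxE !enum_rankK (inj_eq (can_inj enum_rankK)) (negbTE ne) mulr0n subr0.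
    by move=> E; rewrite E eqxx in Hne.
have ev_root : forall l, eigenvalue G l -> (l == a) || (l == b).
  move=> l /eigenvalueP [v Hv nz].
  have : v *m ((G - a%:M) *m (G - b%:M)) = 0 by rewrite Pab mulmx0.
  have Hc : forall c, v *m (G - c%:M) = (l - c) *: v.
    by move=> c; rewrite mulmxBr mul_mx_scalar Hv scalerBl.
  rewrite mulmxA Hc -scalemxAl Hc scalerA => /eqP.
  rewrite scaler_eq0 (negbTE nz) orbF mulf_eq0 !subr_eq0.
  by [].
exists a, b; split => // l; apply/idP/idP; first exact: ev_root.
by case/orP => /eqP ->; [apply: (evr a b) | apply: (evr b a)].
Qed.

Lemma sum_quad (X : finType) (W : X -> X -> algC) al be x w :
  \sum_y (W x y - (x == y)%:R * al) * (W y w - (y == w)%:R * be) =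
  (\sum_y W x y * W y w) - (al + be) * W x w + (x == w)%:R * al * be.
Proof.
under eq_bigr => y _ do rewrite mulrBl !mulrBr.
rewrite !sumrB.
have E1 : \sum_y (x == y)%:R * al * W y w = al * W x w.
  under eq_bigr => y _ do rewrite -mulrA.
  by rewrite sum_delta1.
have E2 : \sum_y W x y * ((y == w)%:R * be) = W x w * be.
  under eq_bigr => y _ do rewrite mulrCA eq_sym.
  by rewrite sum_delta1 mulrC.
have E3 : \sum_y (x == y)%:R * al * ((y == w)%:R * be) = (x == w)%:R * al * be.
  under eq_bigr => y _ do rewrite -mulrA.
  by rewrite sum_delta1 mulrCA mulrA.
rewrite E1 E2 E3; ring.
Qed.

Definition Wm (N : nat) (x y : AA * AA) : algC :=
  dd x ^+ N * dd y ^+ N * e (Bf x y *+ N).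

Lemma ddN2 x N : dd x ^+ N * dd x ^+ N = 1.
Proof. by rewrite -exprMn dd2 expr1n. Qed.

Lemma Wm_xx N x : Wm N x x = 1.
Proof. by rewrite /Wm ddN2 Bf_xx mul0rn e0 mulr1. Qed.

Lemma expM' (a b : algC) k : (a * b) ^+ k = a ^+ k * b ^+ k.
Proof. exact: exprMn. Qed.

Lemma powE (u v w : algC) k : (- (u * v) * w) ^+ k = (-1) ^+ k * (u ^+ k * v ^+ k * w ^+ k).
Proof. by rewrite exprMn [(- (u * v)) ^+ k]exprNn exprMn !mulrA. Qed.

Lemma hpow_E N x y : (0 < N)%N ->
  hadamard_pow (sigmat (fun x v => cc x * gabor z x v) (n%:R - 1) 1) N x y =
  (-1) ^+ N * (Wm N x y - (x == y)%:R).
Proof.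
move=> N0; rewrite /hadamard_pow Sb_E.
case: (eqVneq x y) => [<-|ne].
  by rewrite Wm_xx subrr mulr0 expr0n; case: N N0.
by rewrite subr0 /Wm eMn powE.
Qed.

Lemma card_X : #|{: AA * AA}| = (n ^ 2)%N.
Proof. by rewrite card_prod card_AA. Qed.

Lemma Nr0 N : (p %| N)%N -> (N%:R : 'Z_p) = 0.
Proof. by move=> H; apply: val_inj; rewrite vZ; apply/eqP. Qed.

Lemma W2_div N x w : (p %| N)%N ->
  \sum_y Wm N x y * Wm N y w = (n ^ 2)%:R * Wm N x w.
Proof.
move=> H.
have E : forall a b, Wm N a b = dd a ^+ N * dd b ^+ N.
  by move=> a b; rewrite /Wm -mulr_natr Nr0 // mulr0 e0 mulr1.
rewrite E; transitivity (\sum_(y : AA * AA) dd x ^+ N * dd w ^+ N).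
  apply: eq_bigr => y _; rewrite !E.
  transitivity (dd x ^+ N * dd w ^+ N * (dd y ^+ N * dd y ^+ N)); first ring.
  by rewrite ddN2 mulr1.
by rewrite sumr_const card_X mulr_natl.
Qed.

Definition cs (c : 'Z_p) (v : AA) : AA := [ffun l => c * v l].

Lemma cs_eq0 c v : c \is a GRing.unit -> (cs c v == 0) = (v == 0).
Proof.
move=> Hc; rewrite !eq_ffun; apply: eq_forallb => l.
by rewrite !ffunE -{1}(mulr0 c) (inj_eq (mulrI Hc)).
Qed.

Lemma W2_ndiv N x w : ~~ (p %| N)%N ->
  \sum_y Wm N x y * Wm N y w = (x == w)%:R * (n ^ 2)%:R.
Proof.
move=> H.
set c' : 'Z_p := - h2 * N%:R.
have Hc : c' \is a GRing.unit.
  rewrite unitrM unitrN unitrV unit2 /= unitZpE // prime_coprime //.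
have key : forall y : AA * AA, Bf x y *+ N + Bf y w *+ N =
    dot y.2 (cs c' (x.1 - w.1)) + dot y.1 (cs c' (w.2 - x.2)).
  move=> y; rewrite -[Bf x y *+ N]mulr_natr -[Bf y w *+ N]mulr_natr /Bf (dotC y.2 (cs _ _)) (dotC y.1 (cs _ _)) !dotZl !dotDl !dotNl
     (dotC w.2 y.1) (dotC x.2 y.1) /c'; ring.
transitivity (dd x ^+ N * dd w ^+ N *
   \sum_(y : AA * AA) (e (dot y.2 (cs c' (x.1 - w.1))) * e (dot y.1 (cs c' (w.2 - x.2))))).
  rewrite mulr_sumr; apply: eq_bigr => y _.
  rewrite /Wm -eD -key eD.
  transitivity (dd x ^+ N * dd w ^+ N * (dd y ^+ N * dd y ^+ N) *
                 (e (Bf x y *+ N) * e (Bf y w *+ N))); first ring.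
  by rewrite ddN2 mulr1.
rewrite -(pair_bigA _ (fun k kap => e (dot kap (cs c' (x.1 - w.1))) *
                                     e (dot k (cs c' (w.2 - x.2))))) /=.
under eq_bigr => k _ do rewrite -mulr_suml char_sum.
rewrite -mulr_sumr char_sum !cs_eq0 // !subr_eq0.
clear key; case: x w => [k1 k2] [k3 k4] /=; rewrite xpair_eqE (eq_sym k4).
case: (eqVneq k1 k3) => [<-|ne1]; case: (eqVneq k2 k4) => [<-|ne2] /=;
  rewrite ?mul0r ?mulr0 ?mul1r //.
by rewrite ddN2 mul1r -natrM mulnn.
Qed.

Lemma quad_M N al be
  (HW : forall x w, \sum_y Wm N x y * Wm N y w - (al + be) * Wm N x w
                     + (x == w)%:R * al * be = 0) x w :
  \sum_y ((-1) ^+ N * (Wm N x y - (x == y)%:R) - (x == y)%:R * ((-1) ^+ N * (al - 1))) *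
         ((-1) ^+ N * (Wm N y w - (y == w)%:R) - (y == w)%:R * ((-1) ^+ N * (be - 1))) = 0.
Proof.
transitivity ((-1) ^+ N * (-1) ^+ N *
  \sum_y (Wm N x y - (x == y)%:R * al) * (Wm N y w - (y == w)%:R * be)).
  rewrite mulr_sumr; apply: eq_bigr => y _; ring.
by rewrite sum_quad HW mulr0.
Qed.

Lemma eps_neq N al be : al != be -> (-1) ^+ N * (al - 1) != (-1) ^+ N * (be - 1) :> algC.
Proof.
move=> ne; apply: contra ne => /eqP /(mulrI (unitrX N (unitrN1 _))) /addIr ->.
by [].
Qed.

Lemma rootlem (u v w : algC) : u * u = 1 -> v * v = 1 -> w ^+ p = 1 ->
  (- (u * v) * w) ^+ (2 * p) = 1.
Proof.
move=> hu hv hw; rewrite powE.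
have sq : forall a : algC, a * a = 1 -> a ^+ (2 * p) = 1.
  by move=> a ha; rewrite exprM expr2 ha expr1n.
have m1 : (-1 : algC) * -1 = 1 by rewrite mulrNN mulr1.
rewrite (sq (-1)) // (sq u) // (sq v) // mulnC exprM hw expr1n.
by rewrite !mul1r.
Qed.

Theorem main_sec : roux_lines (0 : AA * AA) (gabor z).
Proof.
exists (n%:R - 1), 1; split; first exact: ltr01.
split.
  by move=> x; rewrite gramE eqxx subrr dot0r e0 mulr1n mul1r.
split.
  by move=> x y ne; rewrite gramE (negbTE ne) mul0r sub0r normrN norm_e.
exists cc; split; first exact: norm_cc.
move=> Sb.
have HSb : forall x y, Sb x y = if x == y then 0 else - (dd x * dd y) * e (Bf x y).
  by move=> x y; rewrite /Sb Sb_E.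
have dd0 : dd 0 = 1 by rewrite /dd eqxx.
have ddy : forall y, y != 0 -> dd y = -1 by move=> y ne; rewrite /dd (negbTE ne).
have border : forall y, y != 0 -> Sb 0 y = 1 /\ Sb y 0 = 1.
  move=> y ne; rewrite !HSb (negbTE ne) eq_sym (negbTE ne) Bf_0x Bf_x0 e0 dd0 ddy //.
  by rewrite !mulr1 !mul1r !opprK.
split; first exact: border.
split.
  move=> x y ne; exists (2 * p)%N; split => //.
  by rewrite HSb (negbTE ne) rootlem ?dd2 ?e_pow_p.
move=> N N0.
have y1ne : (0 : AA * AA) != (one_vec p s, 0).
  rewrite eq_sym xpair_eqE negb_and; apply/orP; left.
  apply/eqP => /ffunP /(_ ord0); rewrite !ffunE => /eqP.
  by rewrite oner_eq0.
have nonsc : exists x1 y1, x1 != y1 /\ hadamard_pow Sb N x1 y1 != 0.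
  exists 0, (one_vec p s, 0); split => //.
  by rewrite /hadamard_pow (border _ _).1 ?expr1n ?oner_eq0 // eq_sym.
have hE : forall x y, hadamard_pow Sb N x y = (-1) ^+ N * (Wm N x y - (x == y)%:R).
  by move=> x y; rewrite /Sb hpow_E.
case: (boolP (p %| N)%N) => Hdiv.
  apply: (@two_eig _ _ ((-1) ^+ N * (0 - 1)) ((-1) ^+ N * ((n ^ 2)%:R - 1))) => //.
  - apply: eps_neq; rewrite eq_sym pnatr_eq0 -lt0n expn_gt0 expn_gt0 //.
  - move=> x w; under eq_bigr => y _ do rewrite !hE.
    apply: quad_M => x' w'; rewrite W2_div //; ring.
  - move=> x w; under eq_bigr => y _ do rewrite !hE.
    apply: quad_M => x' w'; rewrite W2_div //; ring.
have rpos : 0 < (n%:R : algC) by rewrite ltr0n expn_gt0.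
apply: (@two_eig _ _ ((-1) ^+ N * (n%:R - 1)) ((-1) ^+ N * (- n%:R - 1))) => //.
- apply: eps_neq; apply/eqP => E.
  have : 0 < (n%:R : algC) + n%:R by rewrite addr_gt0.
  by rewrite {2}E subrr ltxx.
- move=> x w; under eq_bigr => y _ do rewrite !hE.
  apply: quad_M => x' w'; rewrite W2_ndiv // natrX; ring.
- move=> x w; under eq_bigr => y _ do rewrite !hE.
  apply: quad_M => x' w'; rewrite W2_ndiv // natrX; ring.
Qed.

End G.

Unset Implicit Arguments.

Theorem mainTheorem4 (p s : nat) (z : algC) :
  prime p -> (3 <= p)%N -> p.-primitive_root z ->
  roux_lines (0 : A p s * A p s) (gabor z).
Proof.
case: p => [|[|[|q]]] // pp _ zp.
exact: (@main_sec q s z pp zp).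
Qed.
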